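(* Let $P > Q \ge 1$ and $N \ge 1$ be integers. Let $\bm{A} \in \mathbb{R}^{P\times P}$ be orthogonal. For each $i = 1,\dots,N$ let $p_{i,1},\dots,p_{i,Q} > 0$, let $\bm{N}_i$ be a symmetric positive definite $(P-Q)\times(P-Q)$ matrix, and let $$\bm{E}_i = \begin{pmatrix} \operatorname{diag}(p_{i,1},\dots,p_{i,Q}) & 0 \\ 0 & \bm{N}_i\end{pmatrix}, \qquad \bm{C}_i = \bm{A}\bm{E}_i\bm{A}^{\top}.$$ Let $\bm{\alpha} \in \mathbb{R}^Q$ and $y_i = \sum_{j=1}^Q \alpha_j \sqrt{p_{i,j}}$. Let $\overline{\bm{C}} = \arg\min_{\bm{S}\in\mathcal{S}_P^{++}} \sum_{i=1}^N d_W(\bm{C}_i,\bm{S})^2$ be the Wasserstein mean of $\bm{C}_1,\dots,\bm{C}_N$. Let $\overline{\bm{Y}}\in\mathbb{R}^{P\times P}$ satisfy $\overline{\bm{Y}}\,\overline{\bm{Y}}^{\top}=\overline{\bm{C}}$ and, for each $i$, let $\bm{Y}_i \in \mathbb{R}^{P\times P}$ satisfy $\bm{Y}_i\bm{Y}_i^{\top} = \bm{C}_i$. Let $\overline{\bm{Y}}^{\top}\bm{Y}_i = \bm{U}_i\bm{\Sigma}_i\bm{V}_i^{\top}$ be a singular value decomposition, $\bm{Q}_i^* = \bm{V}_i\bm{U}_i^{\top}$, and $$\bm{v}_i = \operatorname{vec}(\bm{Y}_i\bm{Q}_i^* - \overline{\bm{Y}}) \in \mathbb{R}^{P^2}.$$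 Then there exist $\bm{\beta}\in\mathbb{R}^{P^2}$ and $c\in\mathbb{R}$ such that $y_i = \bm{\beta}^{\top}\bm{v}_i + c$ for all $i=1,\dots,N$.
   Context: $\mathcal{S}_P^{++}$ is the set of $P\times P$ real symmetric positive definite matrices. The Wasserstein (Bures) distance is $d_W(\bm{S},\bm{S}') = \big[\operatorname{Tr}(\bm{S}) + \operatorname{Tr}(\bm{S}') - 2\operatorname{Tr}\big((\bm{S}^{1/2}\bm{S}'\bm{S}^{1/2})^{1/2}\big)\big]^{1/2}$, where $\bm{M}^{1/2}$ denotes the symmetric positive semi-definite square root. $\operatorname{vec}(\bm{M})$ is the vector of all coefficients of the matrix $\bm{M}$. The vector $\bm{v}_i$ is the tangent-space vectorization of $\bm{C}_i$ at $\overline{\bm{C}}$ associated with the Wasserstein metric (the quotient of $\mathbb{R}^{P\times P}_*$ with the Frobenius metric by the orthogonal group). *)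

(* Defs.v *)
From HB Require Import structures.
From mathcomp Require Import all_boot all_order all_algebra.
From Stdlib Require Import ClassicalEpsilon.
Set Implicit Arguments. Unset Strict Implicit. Unset Printing Implicit Defensive.
Import Order.TTheory GRing.Theory Num.Theory.
Local Open Scope ring_scope.

Section Defs.
Variable R : rcfType.

Definition orthogonal_mx n (A : 'M[R]_n) : Prop := A^T *m A = 1%:M.

Definition symmetric_mx n (M : 'M[R]_n) : Prop := M^T = M.

Definition psd_mx n (M : 'M[R]_n) : Prop :=
  symmetric_mx M /\ forall x : 'cV[R]_n, 0 <= (x^T *m M *m x) 0 0.

Definition spd_mx n (M : 'M[R]_n) : Prop :=
  symmetric_mx M /\ forall x : 'cV[R]_n, x != 0 -> 0 < (x^T *m M *m x) 0 0.

Definition is_psd_sqrt n (M B : 'M[R]_n) : Prop := psd_mx B /\ B *m B = M.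

(* M^{1/2}: the symmetric PSD square root (chosen by Hilbert's epsilon;
   unique whenever M is PSD). *)
Definition sqrtm n (M : 'M[R]_n) : 'M[R]_n :=
  epsilon (inhabits (0 : 'M[R]_n)) (is_psd_sqrt M).

Definition dW n (S S' : 'M[R]_n) : R :=
  Num.sqrt (\tr S + \tr S' - 2 * \tr (sqrtm (sqrtm S *m S' *m sqrtm S))).

End Defs.

(* Main.v *)
Require Import Defs.
From HB Require Import structures.
From mathcomp Require Import all_boot all_order all_algebra.
From mathcomp Require Import complex.
From mathcomp Require Import ring lra.
From Stdlib Require Import ClassicalEpsilon.
Import Order.TTheory GRing.Theory Num.Theory.
Set Implicit Arguments. Unset Strict Implicit. Unset Printing Implicit Defensive.
Local Open Scope ring_scope.

Section Lin.
Variable R : rcfType.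

Lemma tr_tmulE m n (M : 'M[R]_(m,n)) : \tr (M^T *m M) = \sum_j \sum_i M i j ^+ 2.
Proof.
rewrite /mxtrace; apply: eq_bigr => j _; rewrite !mxE; apply: eq_bigr => i _.
by rewrite !mxE expr2.
Qed.

Lemma tr_tmul_ge0 m n (M : 'M[R]_(m,n)) : 0 <= \tr (M^T *m M).
Proof.
by rewrite tr_tmulE; apply: sumr_ge0 => j _; apply: sumr_ge0 => i _; exact: sqr_ge0.
Qed.

Lemma tr_tmul_eq0 m n (M : 'M[R]_(m,n)) : \tr (M^T *m M) = 0 -> M = 0.
Proof.
rewrite tr_tmulE => /eqP; rewrite psumr_eq0 => [/allP H|j _]; last first.
  by apply: sumr_ge0 => i _; exact: sqr_ge0.
apply/matrixP => i j; rewrite mxE.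
move: (H j (mem_index_enum j)) => /implyP /(_ isT).
rewrite psumr_eq0 => [/allP /(_ i (mem_index_enum i)) /implyP /(_ isT)|]; last first.
  by move=> *; exact: sqr_ge0.
by rewrite sqrf_eq0 => /eqP.
Qed.

Lemma quad_col n m (B : 'M[R]_n) (X : 'M[R]_(n,m)) k :
  (X^T *m B *m X) k k = ((col k X)^T *m B *m col k X) 0 0.
Proof.
rewrite !mxE; apply: eq_bigr => j _; rewrite !mxE; congr (_ * _).
by apply: eq_bigr => i _; rewrite !mxE.
Qed.

Lemma psd_tr n m (B : 'M[R]_n) (X : 'M[R]_(n,m)) : psd_mx B -> 0 <= \tr (X^T *m B *m X).
Proof.
move=> [_ hB]; rewrite /mxtrace; apply: sumr_ge0 => k _; rewrite quad_col; exact: hB.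
Qed.

Lemma sym_sq0 n m (S : 'M[R]_n) (X : 'M[R]_(n,m)) : S^T = S -> S *m S *m X = 0 -> S *m X = 0.
Proof.
move=> sS h; apply: tr_tmul_eq0.
rewrite trmx_mul sS.
have -> : X^T *m S *m (S *m X) = X^T *m (S *m S *m X) by rewrite !mulmxA.
by rewrite h mulmx0 mxtrace0.
Qed.

Lemma psd_shift0 n m (A : 'M[R]_n) (X : 'M[R]_(n,m)) r :
  psd_mx A -> r < 0 -> (A - r%:M) *m X = 0 -> X = 0.
Proof.
move=> hA hr h; apply: tr_tmul_eq0.
have : \tr (X^T *m ((A - r%:M) *m X)) = 0 by rewrite h mulmx0 mxtrace0.
rewrite mulmxBl mulmxBr raddfB /= mul_scalar_mx -scalemxAr mxtraceZ mulmxA.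
move=> e; have h1 := psd_tr X hA; have h2 := tr_tmul_ge0 X.
apply/eqP; rewrite eq_le h2 andbT.
have : 0 <= - r * \tr (X^T *m X) by apply: mulr_ge0 => //; rewrite oppr_ge0 ltW.
by move=> h3; nra.
Qed.

End Lin.

Section Eig.
Variable R : rcfType.

Lemma sym_eig_real n (A : 'M[R]_n) (z : R[i]) : A^T = A ->
  root (char_poly (map_mx (real_complex R) A)) z -> z \is Num.real.
Proof.
move=> sA; rewrite -eigenvalue_root_char => /eigenvalueP [v hv v0].
set Ac := map_mx _ A in hv.
set w := map_mx Num.conj_op v.
have AcT : Ac^T = Ac by rewrite /Ac map_trmx sA.
have Acc : map_mx Num.conj_op Ac = Ac.
  apply/matrixP=> i j; rewrite !mxE; apply/CrealP; apply/complex_realP.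
  by exists (A i j).
have ww : map_mx Num.conj_op w = v.
  by apply/matrixP=> i j; rewrite !mxE conjCK.
set q := (v *m Ac *m w^T) 0 0.
set nn := (v *m w^T) 0 0.
have hq : q = z * nn by rewrite /q hv -scalemxAl mxE.
have qc : q^* = q.
  have -> : q^* = (map_mx Num.conj_op (v *m Ac *m w^T)) 0 0 by rewrite mxE.
  have wwT : map_mx Num.conj_op w^T = v^T.
    by apply/matrixP=> i j; rewrite !mxE conjCK.
  rewrite !map_mxM Acc wwT.
  transitivity ((w *m Ac *m v^T)^T 0 0); first by rewrite [RHS]mxE.
  by rewrite !trmx_mul trmxK AcT mulmxA.
have nc : nn^* = nn.
  have -> : nn^* = (map_mx Num.conj_op (v *m w^T)) 0 0 by rewrite mxE.
  have wwT : map_mx Num.conj_op w^T = v^T.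
    by apply/matrixP=> i j; rewrite !mxE conjCK.
  rewrite map_mxM wwT.
  transitivity ((w *m v^T)^T 0 0); first by rewrite [RHS]mxE.
  by rewrite !trmx_mul trmxK.
have nn0 : nn != 0.
  have -> : nn = \sum_k `|v 0 k| ^+ 2.
    by rewrite /nn mxE; apply: eq_bigr => k _; rewrite !mxE normCK.
  apply: contra v0; rewrite psumr_eq0 => [/allP H|]; last by move=> *; exact: exprn_ge0.
  apply/eqP/matrixP => i k; rewrite (ord1 i) mxE.
  by move: (H k (mem_index_enum k)) => /implyP /(_ isT); rewrite sqrf_eq0 normr_eq0 => /eqP.
apply/CrealP.
have : (z * nn)^* = z * nn by rewrite -hq qc.
rewrite rmorphM /= nc.
by move/(mulIf nn0).
Qed.

Lemma sym_char_split n (A : 'M[R]_n) : A^T = A ->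
  exists s : seq R, char_poly A = \prod_(r <- s) ('X - r%:P).
Proof.
move=> sA.
have [rs hrs] := closed_field_poly_normal (map_poly (real_complex R) (char_poly A)).
have lc : lead_coef (map_poly (real_complex R) (char_poly A)) = 1.
  by rewrite lead_coef_map (monicP (char_poly_monic A)) rmorph1.
rewrite lc scale1r in hrs.
exists (map (@complex.Re R) rs).
apply: (@map_poly_inj _ _ (real_complex R)).
rewrite hrs rmorph_prod big_map; apply: eq_big_seq => z zin.
rewrite /= map_polyXsubC; congr (_ - _%:P); symmetry; apply: RRe_real.
apply: (sym_eig_real sA).
by rewrite -map_char_poly hrs root_prod_XsubC.
Qed.

End Eig.

Section Sqrt.
Variable R : rcfType.

Definition pXs (s : seq R) : {poly R} := \prod_(r <- s) ('X - r%:P).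

Fixpoint red (s : seq R) : seq R :=
  if s is r :: s' then
    (if (0 <= r) && (r \notin red s') then r :: red s' else red s')
  else [::].

Lemma red_uniq s : uniq (red s).
Proof. by elim: s => //= r s IH; case: ifP => //= /andP [_ ->]. Qed.

Lemma red_ge0 s : all (fun r => 0 <= r) (red s).
Proof. by elim: s => //= r s IH; case: ifP => //= /andP [-> _]. Qed.

Lemma horner_mx_XsubC n (A : 'M[R]_n.+1) r : horner_mx A ('X - r%:P) = A - r%:M.
Proof. by rewrite rmorphB /= horner_mx_X horner_mx_C. Qed.

Lemma sym_shift n (A : 'M[R]_n) r : A^T = A -> (A - r%:M)^T = A - r%:M.
Proof. by move=> sA; rewrite raddfB /= tr_scalar_mx sA. Qed.

Lemma red_ok n (A : 'M[R]_n.+1) : psd_mx A -> forall s q,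
  horner_mx A (pXs s * q) = 0 -> horner_mx A (pXs (red s) * q) = 0.
Proof.
move=> hA; elim => [|r s IH] q //= H.
have H' : horner_mx A (pXs (red s) * (('X - r%:P) * q)) = 0.
  apply: IH; move: H; rewrite /pXs big_cons.
  by rewrite mulrCA mulrA.
case: ifP => [/andP [r0 rn]|hr].
  by rewrite /pXs big_cons -mulrA mulrCA.
case: (boolP (0 <= r)) => r0; last first.
  move: H'; rewrite mulrCA rmorphM /= horner_mx_XsubC => H2.
  apply: (psd_shift0 hA _ H2); by rewrite ltNge.
move: hr; rewrite r0 /= => /negbFE rin.
move: H'; rewrite /pXs (big_rem _ rin) /=.
set P := \prod_(_ <- _) _.
have -> : ('X - r%:P) * P * (('X - r%:P) * q) = ('X - r%:P) * ('X - r%:P) * (P * q) by ring.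
rewrite -mulrA rmorphM /= rmorphM /= horner_mx_XsubC => H2.
rewrite -mulrA rmorphM /= horner_mx_XsubC.
apply: sym_sq0; first by apply: sym_shift; case: hA.
by rewrite -mulmxA.
Qed.

Lemma horner_mx_sym n (A : 'M[R]_n.+1) p : A^T = A -> (horner_mx A p)^T = horner_mx A p.
Proof.
move=> sA; elim/poly_ind: p => [|p c IH]; first by rewrite rmorph0 trmx0.
rewrite rmorphD rmorphM /= horner_mx_X horner_mx_C raddfD /= tr_scalar_mx.
congr (_ + _).
have -> : (horner_mx A p * A)^T = A^T *m (horner_mx A p)^T by exact: trmx_mul.
rewrite IH sA.
have e : horner_mx A (p * 'X) = horner_mx A ('X * p) by rewrite mulrC.
by rewrite !rmorphM /= horner_mx_X in e; rewrite e.
Qed.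

Lemma quad_sq n (P : 'M[R]_n) (x : 'cV[R]_n) :
  P^T = P -> P *m P = P -> 0 <= (x^T *m P *m x) 0 0.
Proof.
move=> sP iP.
have -> : x^T *m P *m x = (P *m x)^T *m (P *m x) by rewrite trmx_mul sP -!mulmxA (mulmxA P) iP.
have := tr_tmul_ge0 (P *m x); by rewrite /mxtrace big_ord1.
Qed.

Lemma lagrange_sqrt n (A : 'M[R]_n.+1) (s : seq R) : psd_mx A -> uniq s ->
  all (fun r => 0 <= r) s -> horner_mx A (pXs s) = 0 -> exists B, is_psd_sqrt A B.
Proof.
move=> hA us /allP s0 hs.
pose L k := \prod_(l <- s | l != k) (('X - l%:P) * ((k - l)^-1)%:P).
have Lk : forall k m, k \in s -> m \in s -> (L k).[m] = (m == k)%:R.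
  move=> k m ks ms; rewrite horner_prod.
  case: eqP => [->|/eqP mk].
    rewrite big_seq_cond big1 // => l /andP [_ lk].
    by rewrite hornerM hornerXsubC hornerC divff // subr_eq0 eq_sym.
  by rewrite (big_rem m) //= mk hornerM hornerXsubC subrr !mul0r.
pose p := \sum_(k <- s) Num.sqrt k *: L k.
have hp : forall m, m \in s -> p.[m] = Num.sqrt m.
  move=> m ms; rewrite horner_sum (bigD1_seq m) //= hornerZ Lk // eqxx mulr1.
  rewrite big_seq_cond big1 ?addr0 // => k /andP [ks km].
  by rewrite hornerZ Lk // eq_sym (negbTE km) mulr0.
have dvd : forall q : {poly R}, all (root q) s -> horner_mx A q = 0.
  move=> q hq; have us' : uniq_roots s by rewrite uniq_rootsE.
  have [t ->] := uniq_roots_prod_XsubC hq us'.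
  by rewrite rmorphM /= -/(pXs s) hs mulr0.
have sA : A^T = A by case: hA.
exists (horner_mx A p); split; last first.
  have : horner_mx A (p * p - 'X) = 0.
    apply: dvd; apply/allP => m ms.
    by rewrite /root hornerD hornerN hornerM hornerX hp // -expr2 sqr_sqrtr ?s0 // subrr.
  by rewrite rmorphB rmorphM /= horner_mx_X => /eqP; rewrite subr_eq0 => /eqP.
split; first exact: horner_mx_sym.
move=> x; rewrite raddf_sum mulmx_sumr mulmx_suml summxE.
rewrite big_seq; apply: sumr_ge0 => k ks; rewrite /= horner_mxZ -scalemxAr -scalemxAl mxE.
apply: mulr_ge0; first exact: sqrtr_ge0.
apply: quad_sq; first exact: horner_mx_sym.
have : horner_mx A (L k * L k - L k) = 0.
  apply: dvd; apply/allP => m ms.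
  by rewrite /root hornerD hornerN hornerM Lk //; case: (m == k); rewrite ?mulr1 ?mul0r subrr.
by rewrite rmorphB rmorphM /= => /eqP; rewrite subr_eq0 => /eqP.
Qed.

End Sqrt.

Section Sqrt2.
Variable R : rcfType.

Lemma psd_sqrt_exists n (A : 'M[R]_n) : psd_mx A -> exists B, is_psd_sqrt A B.
Proof.
case: n A => [|n] A hA.
  exists 0; split; last by apply/matrixP => [[m hm]].
  split; first by rewrite /symmetric_mx trmx0.
  by move=> x; rewrite mulmx0 mul0mx mxE.
have sA : A^T = A by case: hA.
have [s hs] := sym_char_split sA.
have h0 : horner_mx A (pXs s * 1) = 0 by rewrite mulr1 /pXs -hs Cayley_Hamilton.
have := red_ok hA h0; rewrite mulr1 => h1.
exact: (lagrange_sqrt hA (red_uniq s) (red_ge0 s) h1).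
Qed.

Lemma sqrtm_spec n (M : 'M[R]_n) : psd_mx M -> is_psd_sqrt M (sqrtm M).
Proof. by move=> hM; rewrite /sqrtm; apply: epsilon_spec; exact: psd_sqrt_exists. Qed.

Lemma psd_tr0 n m (B : 'M[R]_n) (D : 'M[R]_(n,m)) :
  psd_mx B -> \tr (D^T *m B *m D) = 0 -> B *m D = 0.
Proof.
move=> hB h; have [[[sL _] hL]] := sqrtm_spec hB.
set L := sqrtm B in sL hL *.
have e : D^T *m B *m D = (L *m D)^T *m (L *m D) by rewrite trmx_mul sL -hL !mulmxA.
rewrite e in h; have := tr_tmul_eq0 h => h2.
by rewrite -hL -mulmxA h2 mulmx0.
Qed.

Lemma psd_sqrt_unique n (B1 B2 : 'M[R]_n) : psd_mx B1 -> psd_mx B2 ->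
  B1 *m B1 = B2 *m B2 -> B1 = B2.
Proof.
move=> h1 h2 e.
have s1 : B1^T = B1 by case: h1.
have s2 : B2^T = B2 by case: h2.
set D := B1 - B2.
have sD : D^T = D by rewrite /D raddfB /= s1 s2.
have eD : B1 *m D = - (D *m B2).
  by rewrite /D mulmxBr mulmxBl e opprB.
have t12 : \tr (D^T *m B1 *m D) = - \tr (D^T *m B2 *m D).
  rewrite sD -mulmxA eD mulmxN raddfN /=; congr (- _).
  exact: mxtrace_mulC.
have g1 := psd_tr D h1; have g2 := psd_tr D h2.
have z1 : \tr (D^T *m B1 *m D) = 0 by lra.
have z2 : \tr (D^T *m B2 *m D) = 0 by lra.
have d1 := psd_tr0 h1 z1; have d2 := psd_tr0 h2 z2.
have dd : D^T *m D = 0.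
  rewrite sD {1}/D mulmxBr.
  have -> : D *m B1 = (B1 *m D)^T by rewrite trmx_mul sD s1.
  have -> : D *m B2 = (B2 *m D)^T by rewrite trmx_mul sD s2.
  by rewrite d1 d2 trmx0 subrr.
have : D = 0 by apply: tr_tmul_eq0; rewrite dd mxtrace0.
by move/eqP; rewrite subr_eq0 => /eqP.
Qed.

End Sqrt2.

Lemma zmod4 (V : zmodType) (a b c d : V) : a + b + (c + d) + (a - b - (c - d)) = (a + d) *+ 2.
Proof. rewrite opprB addrACA [a + b + _]addrACA subrr addr0 (addrC c d) [d + c + _]addrACA subrr addr0 mulr2n addrACA //. Qed.

Section G.
Variable R : rcfType.

Lemma spd_psd n (S : 'M[R]_n) : spd_mx S -> psd_mx S.
Proof.
move=> [sS hS]; split => // x; case: (eqVneq x 0) => [->|x0]; first by rewrite mulmx0 mxE.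
by apply: ltW; apply: hS.
Qed.

Lemma spd_unit n (S : 'M[R]_n) : spd_mx S -> S \in unitmx.
Proof.
move=> [sS hS]; rewrite unitmxE unitfE; apply/negP => /det0P [v v0 hv].
have := hS v^T; rewrite trmx_eq0 v0 => /(_ isT).
by rewrite trmxK hv mul0mx mxE ltxx.
Qed.

Lemma psd_conj n (K S : 'M[R]_n) : K^T = K -> psd_mx S -> psd_mx (K *m S *m K).
Proof.
move=> sK [sS hS]; split; first by rewrite /symmetric_mx !trmx_mul sK sS mulmxA.
move=> x; have := hS (K *m x); by rewrite trmx_mul sK !mulmxA.
Qed.

Lemma spd_conj n (K S : 'M[R]_n) : K^T = K -> K \in unitmx -> spd_mx S -> spd_mx (K *m S *m K).
Proof.
move=> sK uK [sS hS]; split; first by rewrite /symmetric_mx !trmx_mul sK sS mulmxA.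
move=> x x0; have := hS (K *m x); rewrite trmx_mul sK !mulmxA; apply.
apply: contra x0 => /eqP h; apply/eqP; by rewrite -(mulKmx uK x) h mulmx0.
Qed.

Lemma psd_sq n (B : 'M[R]_n) : B^T = B -> psd_mx (B *m B).
Proof.
move=> sB; split; first by rewrite /symmetric_mx trmx_mul sB.
move=> x; have := tr_tmul_ge0 (B *m x).
by rewrite /mxtrace big_ord1 trmx_mul sB !mulmxA.
Qed.

Lemma sqrtm_sym n (M : 'M[R]_n) : psd_mx M -> (sqrtm M)^T = sqrtm M.
Proof. by move=> /sqrtm_spec [[]]. Qed.

Lemma sqrtm_sq n (M : 'M[R]_n) : psd_mx M -> sqrtm M *m sqrtm M = M.
Proof. by move=> /sqrtm_spec []. Qed.

Lemma sqrtm_psd n (M : 'M[R]_n) : psd_mx M -> psd_mx (sqrtm M).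
Proof. by move=> /sqrtm_spec []. Qed.

Lemma sqrtm_eq n (M B : 'M[R]_n) : psd_mx B -> B *m B = M -> sqrtm M = B.
Proof.
move=> hB e; have hM : psd_mx M by rewrite -e; apply: psd_sq; case: hB.
apply: psd_sqrt_unique; [exact: sqrtm_psd|exact: hB|by rewrite sqrtm_sq].
Qed.

Lemma sq_unit n (B : 'M[R]_n) : B *m B \in unitmx -> B \in unitmx.
Proof. by rewrite unitmx_mul => /andP []. Qed.

Lemma sqrtm_unit n (M : 'M[R]_n) : spd_mx M -> sqrtm M \in unitmx.
Proof.
move=> hM; apply: sq_unit; rewrite sqrtm_sq; [exact: spd_unit | exact: spd_psd].
Qed.

Lemma key_id n (L V1 V2 : 'M[R]_n) : L^T = L -> V1 *m V1^T + V2 *m V2^T = 1%:M ->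
  \tr ((L - V1^T *m L)^T *m (L - V1^T *m L)) + \tr ((V2^T *m L)^T *m (V2^T *m L))
  = (\tr (L *m L) - \tr (L *m V1 *m L)) *+ 2.
Proof.
move=> sL hV.
have a1 : \tr (L *m (V1^T *m L)) = \tr (L *m V1 *m L).
  by rewrite -mxtrace_tr !trmx_mul trmxK sL.
have a2 : \tr (L *m V1 *m (V1^T *m L)) + \tr (L *m V2 *m (V2^T *m L)) = \tr (L *m L).
  rewrite -raddfD /= !mulmxA -(mulmxA L V1) -(mulmxA L V2).
  by rewrite -mulmxDl -mulmxDr hV mulmx1.
have eT : (L - V1^T *m L)^T = L - L *m V1 by rewrite raddfB /= trmx_mul trmxK sL.
rewrite eT !trmx_mul !trmxK sL mulmxBl !mulmxBr.
rewrite !raddfB /= a1 mulr2n.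
move: a2.
lra.
Qed.

Lemma core n (T X G : 'M[R]_n) : psd_mx T -> T \in unitmx -> X^T = X -> G^T = G ->
  X *m X + G *m G = T *m T -> \tr X <= \tr T /\ (\tr X = \tr T -> G = 0).
Proof.
move=> hT uT sX sG e.
have sT : T^T = T by case: hT.
have sTi : (invmx T)^T = invmx T by rewrite trmx_inv sT.
have hV : (invmx T *m X) *m (invmx T *m X)^T + (invmx T *m G) *m (invmx T *m G)^T = 1%:M.
  rewrite !trmx_mul sX sG sTi !mulmxA -(mulmxA _ X X) -(mulmxA _ G G).
  by rewrite -mulmxDl -mulmxDr e mulmxA mulVmx // mul1mx mulmxV.
have sL : (sqrtm T)^T = sqrtm T by exact: sqrtm_sym.
have LL : sqrtm T *m sqrtm T = T by exact: sqrtm_sq.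
have uL : sqrtm T \in unitmx by apply: sq_unit; rewrite LL.
have key := key_id sL hV.
have t2 : \tr (sqrtm T *m (invmx T *m X) *m sqrtm T) = \tr X.
  by rewrite mxtrace_mulC !mulmxA LL mulmxV // mul1mx.
rewrite t2 LL in key.
move: key.
set E1 := sqrtm T - _; set E2 := (invmx T *m G)^T *m sqrtm T => key.
have g1 := tr_tmul_ge0 E1; have g2 := tr_tmul_ge0 E2.
split; first by move: key; rewrite mulr2n; lra.
move=> eq; have : \tr (E2^T *m E2) = 0 by move: key; rewrite eq mulr2n; lra.
move/tr_tmul_eq0 => /(congr1 (mulmx^~ (invmx (sqrtm T)))); rewrite /E2 -mulmxA mulmxV // mulmx1 mul0mx.
move/(congr1 trmx); rewrite trmxK trmx0 => /(congr1 (mulmx T)).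
by rewrite mulmxA mulmxV // mul1mx mulmx0.
Qed.

End G.

Section H.
Variable R : rcfType.

Lemma trB_le n (C S : 'M[R]_n) : spd_mx C -> spd_mx S ->
  2 * \tr (sqrtm (sqrtm C *m S *m sqrtm C)) <= \tr C + \tr S.
Proof.
move=> hC hS.
have pC := spd_psd hC; have pS := spd_psd hS.
have sK := sqrtm_sym pC; have KK := sqrtm_sq pC; have uK := sqrtm_unit hC.
set K := sqrtm C in sK KK uK *.
have sZ := sqrtm_sym pS; have ZZ := sqrtm_sq pS.
set Z := sqrtm S in sZ ZZ *.
have hM : spd_mx (K *m S *m K) := spd_conj sK uK hS.
have pM := spd_psd hM.
have sB := sqrtm_sym pM; have BB := sqrtm_sq pM; have uB := sqrtm_unit hM.
set B := sqrtm (K *m S *m K) in sB BB uB *.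
set F := K *m Z.
have FF : F *m F^T = B *m B.
  by rewrite BB /F trmx_mul sZ sK !mulmxA -(mulmxA K Z Z) ZZ.
set W := invmx B *m F.
have sBi : (invmx B)^T = invmx B by rewrite trmx_inv sB.
have WW : W *m W^T = 1%:M.
  rewrite /W trmx_mul sBi mulmxA -(mulmxA _ F) FF mulmxA mulVmx // mul1mx mulmxV //.
have WTW : W^T *m W = 1%:M := mulmx1C WW.
have h : B *m W = F by rewrite /W mulmxA mulmxV // mul1mx.
clearbody W.
have eB : B = K *m (Z *m W^T).
  by rewrite mulmxA -/F -h -mulmxA WW mulmx1.
set Y := Z *m W^T in eB *.
have YY : Y *m Y^T = S.
  by rewrite /Y trmx_mul trmxK -mulmxA (mulmxA W^T W) WTW mul1mx sZ ZZ.
have g := tr_tmul_ge0 (K - Y^T).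
have eT : (K - Y^T)^T = K - Y by rewrite raddfB /= trmxK sK.
rewrite eT mulmxBl !mulmxBr !raddfB /= KK YY in g.
have a1 : \tr (K *m Y^T) = \tr (K *m Y).
  by rewrite -mxtrace_tr trmx_mul trmxK sK mxtrace_mulC.
have a2 : \tr (Y *m K) = \tr (K *m Y) by rewrite mxtrace_mulC.
rewrite eB; lra.
Qed.

Lemma dW_sq n (C S : 'M[R]_n) : spd_mx C -> spd_mx S ->
  dW C S ^+ 2 = \tr C + \tr S - 2 * \tr (sqrtm (sqrtm C *m S *m sqrtm C)).
Proof.
move=> hC hS; rewrite /dW sqr_sqrtr //.
have := trB_le hC hS; lra.
Qed.

Lemma psd_scale n c (B : 'M[R]_n) : 0 <= c -> psd_mx B -> psd_mx (c *: B).
Proof.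
move=> c0 [sB hB]; split; first by rewrite /symmetric_mx linearZ /= sB.
by move=> x; rewrite -scalemxAr -scalemxAl mxE; apply: mulr_ge0.
Qed.

Lemma spd_avg n (S1 S2 : 'M[R]_n) : spd_mx S1 -> spd_mx S2 -> spd_mx ((2:R)^-1 *: (S1 + S2)).
Proof.
move=> [s1 h1] [s2 h2]; split.
  by rewrite /symmetric_mx linearZ /= raddfD /= s1 s2.
move=> x x0; rewrite -scalemxAr -scalemxAl mxE mulmxDr mulmxDl mxE.
apply: mulr_gt0; first by rewrite invr_gt0.
by apply: addr_gt0; [apply: h1|apply: h2].
Qed.

Lemma mid n (C S1 S2 : 'M[R]_n) : spd_mx C -> spd_mx S1 -> spd_mx S2 ->
  \tr (sqrtm (sqrtm C *m S1 *m sqrtm C)) + \tr (sqrtm (sqrtm C *m S2 *m sqrtm C))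
    <= 2 * \tr (sqrtm (sqrtm C *m ((2:R)^-1 *: (S1 + S2)) *m sqrtm C))
  /\ (\tr (sqrtm (sqrtm C *m S1 *m sqrtm C)) + \tr (sqrtm (sqrtm C *m S2 *m sqrtm C))
    = 2 * \tr (sqrtm (sqrtm C *m ((2:R)^-1 *: (S1 + S2)) *m sqrtm C)) -> S1 = S2).
Proof.
move=> hC h1 h2.
have hS := spd_avg h1 h2.
have pC := spd_psd hC.
have sK := sqrtm_sym pC; have KK := sqrtm_sq pC; have uK := sqrtm_unit hC.
set K := sqrtm C in sK KK uK *.
set S := (2:R)^-1 *: (S1 + S2) in hS *.
have hM1 := spd_conj sK uK h1; have hM2 := spd_conj sK uK h2; have hM := spd_conj sK uK hS.
have pM1 := spd_psd hM1; have pM2 := spd_psd hM2; have pM := spd_psd hM.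
have sB1 := sqrtm_sym pM1; have BB1 := sqrtm_sq pM1.
have sB2 := sqrtm_sym pM2; have BB2 := sqrtm_sq pM2.
have sB := sqrtm_sym pM; have BB := sqrtm_sq pM; have uB := sqrtm_unit hM.
have pB := sqrtm_psd pM.
set B1 := sqrtm (K *m S1 *m K) in sB1 BB1 *.
set B2 := sqrtm (K *m S2 *m K) in sB2 BB2 *.
set B := sqrtm (K *m S *m K) in sB BB uB pB *.
have pT : psd_mx ((2:R) *: B) by apply: psd_scale.
have uT : (2:R) *: B \in unitmx by rewrite unitmxZ ?uB // unitfE pnatr_eq0.
have sX : (B1 + B2)^T = B1 + B2 by rewrite raddfD /= sB1 sB2.
have sG : (B1 - B2)^T = B1 - B2 by rewrite raddfB /= sB1 sB2.
have e : (B1 + B2) *m (B1 + B2) + (B1 - B2) *m (B1 - B2) = ((2:R) *: B) *m ((2:R) *: B).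
  have e1 : (B1 + B2) *m (B1 + B2) = B1 *m B1 + B1 *m B2 + (B2 *m B1 + B2 *m B2).
    by rewrite mulmxDl !mulmxDr.
  have e2 : (B1 - B2) *m (B1 - B2) = B1 *m B1 - B1 *m B2 - (B2 *m B1 - B2 *m B2).
    by rewrite mulmxBl !mulmxBr.
  rewrite e1 e2 zmod4.
  rewrite -scalemxAr -scalemxAl scalerA BB /S -scalemxAr -scalemxAl scalerA mulmxDr mulmxDl -BB1 -BB2.
  have -> : (2 * 2 * 2^-1 : R) = 2 by field.
  by rewrite scaler_nat.
have [c1 c2] := core pT uT sX sG e.
rewrite mxtraceZ raddfD /= in c1 c2.
split => // eq.
have /eqP := c2 eq; rewrite subr_eq0 => /eqP eB.
have eM : K *m S1 *m K = K *m S2 *m K by rewrite -BB1 -BB2 eB.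
have := congr1 (mulmx (invmx K)) eM; rewrite !mulmxA !mulVmx // !mul1mx.
move/(congr1 (mulmx^~ (invmx K))); by rewrite -!mulmxA !mulmxV // !mulmx1.
Qed.

Lemma inv_orth n (C S O : 'M[R]_n) : spd_mx C -> psd_mx S -> O^T = O -> O *m O = 1%:M ->
  O *m C *m O = C ->
  \tr (sqrtm (sqrtm C *m (O *m S *m O) *m sqrtm C)) = \tr (sqrtm (sqrtm C *m S *m sqrtm C)).
Proof.
move=> hC hS sO OO eC.
have pC := spd_psd hC.
have pK := sqrtm_psd pC; have KK := sqrtm_sq pC.
set K := sqrtm C in pK KK *.
have eK : K = O *m K *m O.
  apply: (sqrtm_eq (psd_conj sO pK)).
  by rewrite !mulmxA -(mulmxA _ O O) OO mulmx1 -(mulmxA _ K K) KK.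
have KO : K *m O = O *m K by rewrite {1}eK -!mulmxA OO mulmx1.
have sK : K^T = K by case: pK.
have e : K *m (O *m S *m O) *m K = O *m (K *m S *m K) *m O.
  by rewrite !mulmxA KO -(mulmxA _ O K) -KO !mulmxA.
rewrite e.
have pM := psd_conj sK hS.
have pB := sqrtm_psd pM; have BB := sqrtm_sq pM.
rewrite (sqrtm_eq (psd_conj sO pB)).
  by rewrite mxtrace_mulC mulmxA OO mul1mx.
by rewrite -[in RHS]BB !mulmxA -(mulmxA _ O O) OO mulmx1.
Qed.

End H.

Section I.
Variable R : rcfType.

Lemma psd_conjT n (A S : 'M[R]_n) : psd_mx S -> psd_mx (A *m S *m A^T).
Proof.
move=> [sS hS]; split; first by rewrite /symmetric_mx !trmx_mul trmxK sS mulmxA.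
move=> x; have := hS (A^T *m x); by rewrite trmx_mul trmxK !mulmxA.
Qed.

Lemma spd_conjT n (A S : 'M[R]_n) : A \in unitmx -> spd_mx S -> spd_mx (A *m S *m A^T).
Proof.
move=> uA [sS hS]; split; first by rewrite /symmetric_mx !trmx_mul trmxK sS mulmxA.
move=> x x0; have := hS (A^T *m x); rewrite trmx_mul trmxK !mulmxA; apply.
have uAT : A^T \in unitmx by rewrite unitmx_tr.
apply: contra x0 => /eqP h; apply/eqP; by rewrite -(mulKmx uAT x) h mulmx0.
Qed.

Lemma entry11 (M : 'M[R]_1) : \tr M = M 0 0.
Proof. by rewrite /mxtrace big_ord1. Qed.

Lemma diag_psd n (Sg : 'M[R]_n) : is_diag_mx Sg -> (forall k, 0 <= Sg k k) -> psd_mx Sg.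
Proof.
move=> /is_diag_mxP dS pS.
have eD : Sg = diag_mx (\row_k Sg k k).
  apply/matrixP => i j; rewrite !mxE; case: eqVneq => [->|ij]; first by rewrite mulr1n.
  by rewrite mulr0n dS.
split.
  by rewrite /symmetric_mx eD tr_diag_mx.
move=> x; rewrite eD mul_mx_diag mxE; apply: sumr_ge0 => k _; rewrite !mxE.
rewrite mulrAC; apply: mulr_ge0 => //; rewrite -expr2; exact: sqr_ge0.
Qed.

Lemma L_eig n (Cb Ci Yb Yi U V Sg : 'M[R]_n) (a : 'cV[R]_n) (d p : R) :
  Yb *m Yb^T = Cb -> Cb^T = Cb -> Cb *m a = d *: a -> a^T *m a = 1%:M -> 0 < d -> 0 < p ->
  Ci *m a = p *: a -> Yi *m Yi^T = Ci ->
  U^T *m U = 1%:M -> V^T *m V = 1%:M -> is_diag_mx Sg -> (forall k, 0 <= Sg k k) ->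
  Yb^T *m Yi = U *m Sg *m V^T ->
  (a^T *m (Yi *m (V *m U^T)) *m (Yb^T *m a)) 0 0 = Num.sqrt d * Num.sqrt p.
Proof.
move=> hYb sCb hCa aa d0 p0 hCi hYi hU hV dS pS hsvd.
set W := Yi *m (V *m U^T).
set M := Yb^T *m W.
have eM : M = U *m Sg *m U^T.
  by rewrite /M /W mulmxA hsvd -!mulmxA (mulmxA V^T V) hV mul1mx.
have pSg := diag_psd dS pS.
have pM : psd_mx M by rewrite eM; exact: psd_conjT.
have sM : M^T = M by case: pM.
have VVT : V *m V^T = 1%:M := mulmx1C hV.
have WW : W *m W^T = Ci.
  rewrite /W !trmx_mul trmxK !mulmxA -(mulmxA _ U^T U) hU mulmx1.
  by rewrite -(mulmxA _ V V^T) VVT mulmx1.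
have MM : M *m M = Yb^T *m Ci *m Yb.
  rewrite -{2}sM /M trmx_mul mulmxA -(mulmxA _ W W^T) WW.
  by rewrite trmxK.
set x := Yb^T *m a.
have Mx2 : M *m (M *m x) = (d * p) *: x.
  rewrite mulmxA MM /x -!mulmxA (mulmxA Yb) hYb hCa -scalemxAr hCi scalerA -scalemxAr.
  done.
set s := Num.sqrt (d * p).
have s0 : 0 < s by rewrite sqrtr_gt0 mulr_gt0.
have ss : s * s = d * p by rewrite -expr2 sqr_sqrtr // ltW // mulr_gt0.
set z := M *m x - s *: x.
have Mz : M *m z = - s *: z.
  rewrite /z mulmxBr Mx2 -scalemxAr -ss -scalerA scalerBr scaleNr. by rewrite scaleNr opprK addrC.
have zMz : (z^T *m M *m z) 0 0 = - s * (z^T *m z) 0 0.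
  by rewrite -mulmxA Mz -scalemxAr mxE.
have g1 : 0 <= (z^T *m M *m z) 0 0 by case: pM => _; apply.
have g2 : 0 <= (z^T *m z) 0 0 by rewrite -entry11; exact: tr_tmul_ge0.
have z00 : (z^T *m z) 0 0 = 0 by nra.
have z0 : z = 0 by apply: tr_tmul_eq0; rewrite entry11.
have Mx : M *m x = s *: x by apply/eqP; rewrite -subr_eq0; apply/eqP.
have xx : x^T *m x = d%:M.
  rewrite /x trmx_mul trmxK mulmxA -(mulmxA a^T) hYb -mulmxA hCa -scalemxAr aa.
  by rewrite scalemx1.
have xMx : x^T *m M *m x = d *: (a^T *m W *m x).
  rewrite /M {1}/x trmx_mul trmxK !mulmxA -(mulmxA a^T Yb) hYb.
  have -> : a^T *m Cb = d *: a^T by rewrite -sCb -trmx_mul hCa linearZ.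
  by rewrite -!scalemxAl.
have : (x^T *m M *m x) 0 0 = s * d.
  by rewrite -mulmxA Mx -scalemxAr xx mxE mxE eqxx mulr1n.
rewrite xMx mxE => h.
have : (a^T *m W *m x) 0 0 = s.
  apply: (mulfI (lt0r_neq0 d0)); by rewrite h mulrC.
by rewrite /x -/W mulmxA => ->; rewrite /s sqrtrM // ltW.
Qed.

End I.

Section J.
Variable R : rcfType.

Definition refl_row (n : nat) (k : 'I_n) : 'rV[R]_n := \row_l (if l == k then -1 else 1).

Lemma refl_conj n (k : 'I_n) (M : 'M[R]_n) l m :
  (diag_mx (refl_row k) *m M *m diag_mx (refl_row k)) l m
  = (if l == k then -1 else 1) * M l m * (if m == k then -1 else 1).
Proof. by rewrite mul_mx_diag mxE mul_diag_mx !mxE. Qed.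

Lemma refl_sq n (k : 'I_n) : diag_mx (refl_row k) *m diag_mx (refl_row k) = 1%:M.
Proof.
apply/matrixP => i j; rewrite mul_diag_mx !mxE.
case: (i =P j) => [->|ij]; last by rewrite mulr0n mulr0.
by rewrite !mulr1n; case: (j == k); rewrite ?mulrNN mulr1.
Qed.

Lemma block_fix Q K (pp : 'rV[R]_Q) (Nm : 'M[R]_K) (j : 'I_Q) :
  diag_mx (refl_row (lshift K j)) *m block_mx (diag_mx pp) 0 0 Nm *m diag_mx (refl_row (lshift K j))
  = block_mx (diag_mx pp) 0 0 Nm.
Proof.
have nrl : forall i : 'I_K, (rshift Q i == lshift K j) = false.
  move=> i; apply/negbTE/negP => /eqP /(congr1 val) /= e.
  by move: (ltn_ord j); rewrite -e ltnNge leq_addr.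
apply/matrixP => l m; rewrite refl_conj.
case: (split_ordP l) => l' ->; case: (split_ordP m) => m' ->.
- rewrite !block_mxEul !mxE !(inj_eq (@lshift_inj _ _)).
  case: (l' =P m') => [->|lm]; last by rewrite mulr0n mulr0 mul0r.
  by case: (m' == j); rewrite ?mulrN ?mulNr ?opprK ?mulr1 ?mul1r.
- by rewrite !block_mxEur !mxE mulr0 mul0r.
- by rewrite !block_mxEdl !mxE mulr0 mul0r.
- by rewrite !block_mxEdr !nrl mulr1 mul1r.
Qed.

Lemma eig_from_sym n (A Cb : 'M[R]_n) (k : 'I_n) : A^T *m A = 1%:M ->
  A *m diag_mx (refl_row k) *m A^T *m Cb *m (A *m diag_mx (refl_row k) *m A^T) = Cb ->
  Cb *m (A *m delta_mx k (0 : 'I_1)) = (A^T *m Cb *m A) k k *: (A *m delta_mx k (0 : 'I_1)).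
Proof.
move=> hA h.
have AAT : A *m A^T = 1%:M := mulmx1C hA.
set Rr := diag_mx (refl_row k) in h *.
set D := A^T *m Cb *m A.
have eCb : Cb = A *m D *m A^T by rewrite /D !mulmxA AAT mul1mx -mulmxA AAT mulmx1.
have hD : Rr *m D *m Rr = D.
  transitivity (A^T *m (A *m Rr *m A^T *m Cb *m (A *m Rr *m A^T)) *m A); last by rewrite h.
  apply/esym; rewrite /D !mulmxA hA mul1mx.
  by rewrite -mulmxA hA mulmx1.
have De : D *m delta_mx k (0 : 'I_1) = D k k *: delta_mx k (0 : 'I_1).
  rewrite -colE; apply/matrixP => l z; rewrite (ord1 z) !mxE.
  case: (l =P k) => [->|lk]; first by rewrite mulr1.
  rewrite mulr0.
  have := congr1 (fun X : 'M[R]_n => X l k) hD; rewrite /= refl_conj eqxx.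
  move/eqP: lk => /negbTE ->.
  move=> e; have : 2 * D l k = 0 by move: e; rewrite mul1r mulrN1; lra.
  move/eqP; rewrite mulf_eq0 pnatr_eq0 /= => /eqP h0; by rewrite -[RHS]h0 /D mxE.
clearbody D.
rewrite {1}eCb -!mulmxA (mulmxA A^T A) hA mul1mx De.
by rewrite scalemxAr.
Qed.

Lemma bary_sym n N (C : 'I_N -> 'M[R]_n) (Cb O : 'M[R]_n) : (0 < N)%N ->
  (forall i, spd_mx (C i)) -> spd_mx Cb ->
  (forall S, spd_mx S -> \sum_(i < N) dW (C i) Cb ^+ 2 <= \sum_(i < N) dW (C i) S ^+ 2) ->
  O^T = O -> O *m O = 1%:M -> (forall i, O *m C i *m O = C i) -> O *m Cb *m O = Cb.
Proof.
move=> N0 hC hCb hmin sO OO hOC.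
apply/eqP; apply/negPn/negP => neq.
set S2 := O *m Cb *m O in neq.
have uO : O \in unitmx by case: (mulmx1_unit OO).
have h2 : spd_mx S2 := spd_conj sO uO hCb.
have hS := spd_avg hCb h2.
set S' := (2:R)^-1 *: (Cb + S2) in hS.
have trS2 : \tr S2 = \tr Cb by rewrite /S2 mxtrace_mulC mulmxA OO mul1mx.
have e2 : forall i, dW (C i) S2 ^+ 2 = dW (C i) Cb ^+ 2.
  move=> i; rewrite !dW_sq // trS2 inv_orth //; exact: spd_psd.
have e3 : forall i, 2 * dW (C i) S' ^+ 2 < dW (C i) Cb ^+ 2 + dW (C i) S2 ^+ 2.
  move=> i; rewrite !dW_sq //.
  have [m1 m2] := mid (hC i) hCb h2.
  have trS : \tr S' = (2:R)^-1 * (\tr Cb + \tr S2) by rewrite /S' mxtraceZ raddfD.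
  rewrite trS -/S'.
  set t1 := \tr (sqrtm (_ *m Cb *m _)) in m1 m2 *.
  set t2 := \tr (sqrtm (_ *m S2 *m _)) in m1 m2 *.
  set t' := \tr (sqrtm (_ *m S' *m _)) in m1 m2 *.
  have lt : t1 + t2 < 2 * t'.
    rewrite lt_neqAle m1 andbT; apply/eqP => /m2 eq.
    by move: neq; rewrite eq eqxx.
  lra.
have := hmin S' hS.
have lt : \sum_(i < N) 2 * dW (C i) S' ^+ 2 < \sum_(i < N) (dW (C i) Cb ^+ 2 + dW (C i) S2 ^+ 2).
  apply: ltr_sum => //; apply/hasP; exists (Ordinal N0) => //; exact: mem_index_enum.
rewrite -mulr_sumr big_split /= in lt.
have e2s : \sum_(i < N) dW (C i) S2 ^+ 2 = \sum_(i < N) dW (C i) Cb ^+ 2.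
  by apply: eq_bigr => i _; exact: e2.
rewrite e2s in lt.
lra.
Qed.

End J.

Section K.
Variable R : rcfType.

Lemma diag_quad n (pp : 'rV[R]_n) (x : 'cV[R]_n) :
  (x^T *m diag_mx pp *m x) 0 0 = \sum_k pp 0 k * x k 0 ^+ 2.
Proof.
rewrite mul_mx_diag mxE; apply: eq_bigr => k _; rewrite !mxE; ring.
Qed.

Lemma spd_block Q K (pp : 'rV[R]_Q) (Nm : 'M[R]_K) :
  (forall j, 0 < pp 0 j) -> spd_mx Nm -> spd_mx (block_mx (diag_mx pp) 0 0 Nm).
Proof.
move=> hp [sN hN]; split.
  by rewrite /symmetric_mx tr_block_mx tr_diag_mx !trmx0 sN.
move=> x x0; rewrite -(vsubmxK x) tr_col_mx mul_row_block !mulmx0 addr0 add0r.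
rewrite mul_row_col mxE.
set x1 := usubmx x; set x2 := dsubmx x.
have g1 : 0 <= (x1^T *m diag_mx pp *m x1) 0 0.
  rewrite diag_quad; apply: sumr_ge0 => k _; apply: mulr_ge0; [exact: ltW|exact: sqr_ge0].
have pN : psd_mx Nm by apply: spd_psd.
have g2 : 0 <= (x2^T *m Nm *m x2) 0 0 by case: pN => _; apply.
case: (eqVneq x2 0) => [e2|n2]; last first. have := hN x2 n2. lra.
have n1 : x1 != 0.
  apply: contra x0 => /eqP e1; apply/eqP; by rewrite -(vsubmxK x) -/x1 -/x2 e1 e2 col_mx0.
suff : (x1^T *m diag_mx pp *m x1) 0 0 != 0 by move=> h; rewrite e2 mulmx0 [X in _ + X]mxE addr0 lt_neqAle eq_sym h g1.
rewrite diag_quad psumr_eq0 => [|k _]; last by apply: mulr_ge0; [exact: ltW|exact: sqr_ge0].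
apply: contra n1 => /allP H; apply/eqP/matrixP => k z; rewrite (ord1 z) [RHS]mxE.
move: (H k (mem_index_enum k)) => /implyP /(_ isT).
by rewrite mulf_eq0 (gt_eqF (hp k)) /= sqrf_eq0 => /eqP.
Qed.

End K.

Unset Implicit Arguments.

Theorem proposition3 (R : rcfType) (Q K N : nat)
  (hQ : (1 <= Q)%N) (hK : (1 <= K)%N) (hN : (1 <= N)%N)
  (A : 'M[R]_(Q + K)) (hA : orthogonal_mx A)
  (p : 'I_N -> 'I_Q -> R) (hp : forall i j, 0 < p i j)
  (Nm : 'I_N -> 'M[R]_K) (hNm : forall i, spd_mx (Nm i))
  (alpha : 'I_Q -> R)
  (Cbar : 'M[R]_(Q + K))
  (hCbar : spd_mx Cbar /\
     forall S : 'M[R]_(Q + K), spd_mx S ->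
       \sum_(i < N) dW (A *m block_mx (diag_mx (\row_j p i j)) 0 0 (Nm i) *m A^T) Cbar ^+ 2
       <= \sum_(i < N) dW (A *m block_mx (diag_mx (\row_j p i j)) 0 0 (Nm i) *m A^T) S ^+ 2)
  (Ybar : 'M[R]_(Q + K)) (hYbar : Ybar *m Ybar^T = Cbar)
  (Y : 'I_N -> 'M[R]_(Q + K))
  (hY : forall i, Y i *m (Y i)^T = A *m block_mx (diag_mx (\row_j p i j)) 0 0 (Nm i) *m A^T)
  (U V Sig : 'I_N -> 'M[R]_(Q + K))
  (hU : forall i, orthogonal_mx (U i)) (hV : forall i, orthogonal_mx (V i))
  (hSig : forall i, is_diag_mx (Sig i) /\ forall k, 0 <= Sig i k k)
  (hsvd : forall i, Ybar^T *m Y i = U i *m Sig i *m (V i)^T) :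
  exists (beta : 'cV[R]_((Q + K) * (Q + K))) (c : R),
    forall i : 'I_N,
      \sum_(j < Q) alpha j * Num.sqrt (p i j)
      = (mxvec (Y i *m (V i *m (U i)^T) - Ybar) *m beta) 0 0 + c.
Proof.
set E := fun i => block_mx (diag_mx (\row_j p i j)) 0 0 (Nm i).
set C := fun i => A *m E i *m A^T.
have hAA : A^T *m A = 1%:M by exact: hA.
have AAT : A *m A^T = 1%:M := mulmx1C hAA.
have uA : A \in unitmx by case: (mulmx1_unit AAT).
have hE : forall i, spd_mx (E i).
  by move=> i; apply: spd_block => // j; rewrite mxE.
have hC : forall i, spd_mx (C i) by move=> i; exact: spd_conjT uA (hE i).
have [hCb hmin] := hCbar.
have sCb : Cbar^T = Cbar by case: hCb.
pose a j := A *m delta_mx (lshift K j) (0 : 'I_1).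
pose d j := (A^T *m Cbar *m A) (lshift K j) (lshift K j).
have hCa : forall j, Cbar *m a j = d j *: a j.
  move=> j; apply: (eig_from_sym hAA).
  set Rr := diag_mx (refl_row R (lshift K j)).
  have sRr : Rr^T = Rr by rewrite tr_diag_mx.
  have RR : Rr *m Rr = 1%:M by apply: refl_sq.
  apply: (bary_sym (C := C)) => //.
  - by rewrite !trmx_mul trmxK sRr mulmxA.
  - rewrite !mulmxA -(mulmxA _ A^T A) hAA mulmx1 -(mulmxA _ Rr Rr) RR mulmx1.
    exact: AAT.
  - move=> i; rewrite /C !mulmxA -(mulmxA _ A^T A) hAA mulmx1.
    rewrite -(mulmxA _ A^T A) hAA mulmx1.
    rewrite -!mulmxA; congr (A *m _); rewrite !mulmxA; congr (_ *m A^T).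
    exact: block_fix.
have aa : forall j, (a j)^T *m a j = 1%:M.
  move=> j; rewrite /a trmx_mul mulmxA -(mulmxA _ A^T A) hAA mulmx1 trmx_delta mul_delta_mx.
  by apply/matrixP => x y; rewrite (ord1 x) (ord1 y) !mxE.
have da : forall j, ((a j)^T *m Cbar *m a j) 0 0 = d j.
  by move=> j; rewrite -mulmxA hCa -scalemxAr aa !mxE eqxx mulr1.
have d0 : forall j, 0 < d j.
  move=> j; rewrite -da; case: hCb => _ hp'; apply: hp'.
  apply/eqP => a0; have := aa j; rewrite a0 mulmx0 => /matrixP /(_ 0 0).
  by rewrite !mxE eqxx => /esym/eqP; rewrite oner_eq0.
have hEd : forall i j, E i *m delta_mx (lshift K j) (0 : 'I_1) = p i j *: delta_mx (lshift K j) (0 : 'I_1).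
  move=> i j; rewrite -colE; apply/matrixP => l z; rewrite (ord1 z) mxE [RHS]mxE.
  have nrl : forall t : 'I_K, (rshift Q t == lshift K j) = false.
    move=> t; apply/negbTE/negP => /eqP /(congr1 val) /= e.
    by move: (ltn_ord j); rewrite -e ltnNge leq_addr.
  rewrite /E; case: (split_ordP l) => l' ->.
    rewrite block_mxEul !mxE (inj_eq (@lshift_inj _ _)) andbT.
    by case: (l' =P j) => [->|_]; rewrite ?mulr1n ?mulr1 ?mulr0n ?mulr0.
  by rewrite block_mxEdl !mxE nrl mulr0.
have hCia : forall i j, C i *m a j = p i j *: a j.
  move=> i j; rewrite /C /a -!mulmxA (mulmxA A^T A) hAA mul1mx hEd.
  by rewrite scalemxAr.
have key : forall i j, ((a j)^T *m (Y i *m (V i *m (U i)^T)) *m (Ybar^T *m a j)) 0 0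
    = Num.sqrt (d j) * Num.sqrt (p i j).
  move=> i j.
  exact: (L_eig hYbar sCb (hCa j) (aa j) (d0 j) (hp i j) (hCia i j) (hY i) (hU i) (hV i)
    (hSig i).1 (hSig i).2 (hsvd i)).
pose G j := mxvec (a j *m ((a j)^T *m Ybar)).
pose cf j := alpha j / Num.sqrt (d j).
have lin : forall j (W : 'M[R]_(Q+K)),
    (mxvec W *m (G j)^T) 0 0 = ((a j)^T *m W *m (Ybar^T *m a j)) 0 0.
  move=> j W.
  transitivity ((G j *m (mxvec W)^T)^T 0 0); first by rewrite trmx_mul trmxK.
  rewrite mxE /G; move: (a j) => v.
  have := mxvec_dotmul W v^T (v^T *m Ybar).
  by rewrite !trmx_mul !trmxK => ->.
exists (\sum_(j < Q) cf j *: (G j)^T).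
exists (\sum_(j < Q) cf j * ((a j)^T *m Ybar *m (Ybar^T *m a j)) 0 0).
move=> i.
rewrite mulmx_sumr summxE.
have sub11 : forall M1 M2 : 'M[R]_1, (M1 - M2) 0 0 = M1 0 0 - M2 0 0 by move=> *; rewrite !mxE.
have e : forall j, (mxvec (Y i *m (V i *m (U i)^T) - Ybar) *m (cf j *: (G j)^T)) 0 0
    = cf j * (Num.sqrt (d j) * Num.sqrt (p i j)) - cf j * ((a j)^T *m Ybar *m (Ybar^T *m a j)) 0 0.
  move=> j; rewrite -scalemxAr mxE lin mulmxBr mulmxBl sub11 key.
  by rewrite mulrBr.
rewrite (eq_bigr _ (fun j _ => e j)) sumrB subrK.
apply: eq_bigr => j _; rewrite /cf mulrA divfK //.
by rewrite lt0r_neq0 // sqrtr_gt0.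
Qed.
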